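(* Let $R$ be a Bézout domain and let $A,B,C\in R^{n\times n}$ satisfy $ABA=ACA$. If $AB$ and $CA$ are group invertible, then $(AB)^{\#}$ is similar to $(CA)^{\#}$.
   Context: A Bézout domain is an integral domain in which every finitely generated ideal is principal. A matrix $M\in R^{n\times n}$ is group invertible if there exists $X\in R^{n\times n}$ with $MX=XM$, $XMX=X$, $MXM=M$; such $X$ is unique and denoted $M^{\#}$ (the group inverse). Two matrices $M,N\in R^{n\times n}$ are similar if $M=S^{-1}NS$ for some invertible $S\in R^{n\times n}$. *)

(* Defs.v *)
From mathcomp Require Import all_boot all_order all_algebra.
Set Implicit Arguments. Unset Strict Implicit. Unset Printing Implicit Defensive.
Import GRing.Theory.
Local Open Scope ring_scope.

Definition fg_ideal_mem (R : comRingType) (s : seq R) (x : R) : Prop :=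
  exists c : 'I_(size s) -> R, x = \sum_(i < size s) c i * s`_i.

Definition bezout_domain (R : idomainType) : Prop :=
  forall s : seq R, exists d : R,
    forall x : R, fg_ideal_mem s x <-> exists r : R, x = r * d.

Definition is_group_inverse (R : comRingType) (n : nat) (M X : 'M[R]_n) : Prop :=
  [/\ M *m X = X *m M, X *m M *m X = X & M *m X *m M = M].

Definition group_invertible (R : comRingType) (n : nat) (M : 'M[R]_n) : Prop :=
  exists X, is_group_inverse M X.

Definition mx_similar (R : comUnitRingType) (n : nat) (M N : 'M[R]_n) : Prop :=
  exists S : 'M[R]_n, S \in unitmx /\ M = invmx S *m N *m S.

(* Main.v *)
Require Import Defs.
From mathcomp Require Import all_boot all_order all_algebra.
Set Implicit Arguments. Unset Strict Implicit. Unset Printing Implicit Defensive.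
Import GRing.Theory.
Local Open Scope ring_scope.


Lemma bez2 (R : idomainType) (hB : bezout_domain R) (a b : R) : (a != 0) || (b != 0) ->
  exists g a1 b1 x y : R, [/\ a = a1 * g, b = b1 * g & x * a1 + y * b1 = 1].
Proof.
move=> nz; have [d hd] := hB [:: a; b].
have [a1 ea] : exists r, a = r * d.
  apply/hd; exists (fun i : 'I_2 => (i == 0 :> nat)%:R).
  by rewrite /= !big_ord_recl big_ord0 /= mul1r mul0r !addr0.
have [b1 eb] : exists r, b = r * d.
  apply/hd; exists (fun i : 'I_2 => (i == 1 :> nat)%:R).
  by rewrite /= !big_ord_recl big_ord0 /= mul1r mul0r addr0 add0r.
have [c ec] : fg_ideal_mem [:: a; b] d by apply/hd; exists 1; rewrite mul1r.
move: ec; rewrite /= !big_ord_recl big_ord0 /= addr0 => ec.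
have dnz : d != 0.
  apply: contraTneq nz => d0; by rewrite ea eb d0 !mulr0 eqxx.
exists d, a1, b1, (c ord0), (c (lift ord0 ord0)); split => //.
apply: (mulIf dnz); rewrite mul1r mulrDl -!mulrA -ea -eb.
exact/esym.
Qed.

Lemma colred (R : idomainType) (hB : bezout_domain R) n (v : 'cV[R]_(1 + n)) :
  exists (M : 'M[R]_(1 + n)) (d : R), M \in unitmx /\ M *m v = col_mx d%:M 0.
Proof.
elim: n v => [|n IH] v.
  exists 1%:M, (usubmx v 0 0); split; first exact: unitmx1.
  by rewrite mul1mx -mx11_scalar -{1}[v]vsubmxK (flatmx0 (dsubmx v)).
move: v; change (1 + n.+1)%N with (1 + (1 + n))%N => v.
have [M' [b [uM' eM']]] := IH (dsubmx v : 'cV_(1 + n)).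
pose a := usubmx v 0 0.
pose N1 : 'M[R]_(1 + (1 + n)) := block_mx 1%:M 0 0 M'.
have uN1 : N1 \in unitmx.
  by rewrite unitmxE det_ublock det1 mul1r -unitmxE.
have eN1 : N1 *m v = col_mx a%:M (col_mx b%:M 0).
  rewrite -{1}[v]vsubmxK mul_block_col !mul1mx !mul0mx addr0 add0r.
  by rewrite -mx11_scalar eM'.
have [/andP[/eqP a0 /eqP b0]|nz] := boolP ((a == 0) && (b == 0)).
  exists N1, 0; split => //; rewrite eN1 a0 b0 !raddf0 !col_mx0 //.
have nz' : (a != 0) || (b != 0) by move: nz; rewrite negb_and.
have [g [a1 [b1 [x [y [ea eb exy]]]]]] := bez2 hB nz'.
pose N2 : 'M[R]_(1 + (1 + n)) := block_mx x%:M (row_mx y%:M 0)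
  (col_mx (- b1)%:M 0) (block_mx a1%:M 0 0 1%:M).
pose N3 : 'M[R]_(1 + (1 + n)) := block_mx a1%:M (row_mx (- y)%:M 0)
  (col_mx b1%:M 0) (block_mx x%:M 0 0 1%:M).
have e23 : N2 *m N3 = 1%:M.
  rewrite (scalar_mx_block 1 (1 + n)) (scalar_mx_block 1 n) /N2 /N3 /block_mx.
  rewrite !(mul_col_mx, mul_row_col, mul_mx_row, mul_col_row).
  rewrite ?mulmx0 ?mul0mx ?mulmx1 ?mul1mx ?addr0 ?add0r.
  rewrite -!scalar_mxM !(add_row_mx, add_col_mx) ?addr0 ?add0r -!raddfD /=.
  have -> : x * - y + y * x = 0 by rewrite mulrN mulrC addNr.
  have -> : - b1 * a1 + a1 * b1 = 0 by rewrite mulNr mulrC addNr.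
  have -> : - b1 * - y + a1 * x = 1 by rewrite mulrNN addrC mulrC [b1 * y]mulrC.
  rewrite exy !raddf0 !row_mx0.
  by congr col_mx; rewrite -(col_mx0 _ 1 n 1) -block_mxEh.
have uN2 : N2 \in unitmx by case: (mulmx1_unit e23).
exists (N2 *m N1), g; split; first by rewrite unitmx_mul uN2 uN1.
rewrite -mulmxA eN1 /N2 /block_mx.
rewrite !(mul_col_mx, mul_row_col, mul_mx_row, mul_col_row).
rewrite ?mulmx0 ?mul0mx ?mulmx1 ?mul1mx ?addr0 ?add0r -!scalar_mxM -!raddfD /=.
rewrite ea eb mulrA [y * _]mulrA -mulrDl exy mul1r.
rewrite add_col_mx -raddfD /= addr0.
rewrite mulNr mulrCA addNr raddf0.
by rewrite col_mx0.
Qed.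

Lemma idem_step (R : idomainType) (hB : bezout_domain R) n (E : 'M[R]_(1 + n)) : E *m E = E -> E != 0 ->
  exists (P Q : 'M[R]_(1 + n)) (E1 : 'M[R]_n),
  [/\ P *m Q = 1%:M, Q *m P = 1%:M, E1 *m E1 = E1 &
      P *m E *m Q = block_mx 1%:M 0 0 E1].
Proof.
move=> idE nzE.
have [i [j nzij]] : exists i j, E i j != 0.
  case: (pickP (fun ij : 'I_(1 + n) * 'I_(1 + n) => E ij.1 ij.2 != 0)) => [[i j] /= h|h].
    by exists i, j.
  case/eqP: nzE; apply/matrixP => i j; rewrite mxE.
  by move: (h (i, j)) => /= /negbFE/eqP.
pose v := E *m delta_mx j (0 : 'I_1).
have Ev : E *m v = v by rewrite /v mulmxA idE.
have nzv : v != 0.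
  apply: contraNneq nzij => v0.
  have := congr1 (fun A : 'cV_(1+n) => A i 0) v0.
  rewrite /v -colE !mxE => <-; done.
have [M [d [uM eM]]] := colred hB v.
have nzd : d != 0.
  apply: contraNneq nzv => d0.
  by rewrite -(mulKmx uM v) eM d0 raddf0 col_mx0 mulmx0.
pose G := M *m E *m invmx M.
have GM : G *m col_mx d%:M 0 = col_mx d%:M 0.
  by rewrite -eM /G !mulmxA mulmxKV // -(mulmxA M E E) idE.
have idG : G *m G = G.
  by rewrite /G !mulmxA mulmxKV // -(mulmxA M) idE.
rewrite -(submxK G) mul_block_col !mulmx0 !addr0 in GM.
case/eq_col_mx: GM; rewrite !mul_mx_scalar => g11e g21e.
have g11 : ulsubmx G = 1%:M.
  apply/matrixP => a b; rewrite !ord1.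
  move/matrixP: g11e => /(_ 0 0); rewrite !mxE eqxx /= mulr1n.
  by rewrite -[RHS]mulr1; move/mulfI => ->.
have g21 : dlsubmx G = 0.
  apply/matrixP => a b; rewrite !ord1.
  move/matrixP: g21e => /(_ a 0); rewrite !mxE.
  by move/eqP; rewrite mulf_eq0 (negbTE nzd) /= => /eqP.
set g12 := ursubmx G; set g22 := drsubmx G.
have eG : G = block_mx 1%:M g12 0 g22 by rewrite -g11 -g21 submxK.
move: idG; rewrite eG mulmx_block !mul1mx !mulmx0 !mul0mx !addr0 !add0r.
case/eq_block_mx => _ e12 _ e22.
have e12' : g12 *m g22 = 0.
  by apply/eqP; rewrite -(addrI g12 (etrans e12 (esym (addr0 g12)))).
pose T : 'M[R]_(1 + n) := block_mx 1%:M (- g12) 0 1%:M.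
pose T' : 'M[R]_(1 + n) := block_mx 1%:M g12 0 1%:M.
have TT' : T *m T' = 1%:M.
  rewrite /T /T' mulmx_block !mul1mx !mulmx1 !mulmx0 !mul0mx !addr0 !add0r addrN.
  by rewrite -scalar_mx_block.
have T'T : T' *m T = 1%:M.
  rewrite /T /T' mulmx_block !mul1mx !mulmx1 !mulmx0 !mul0mx !addr0 !add0r addNr.
  by rewrite -scalar_mx_block.
exists (T' *m M), (invmx M *m T), g22; split => //.
- by rewrite mulmxA -(mulmxA T') mulmxV // mulmx1 T'T.
- by rewrite mulmxA -(mulmxA _ T) TT' mulmx1 mulVmx.
- have -> : T' *m M *m E *m (invmx M *m T) = T' *m G *m T by rewrite /G !mulmxA.
  rewrite eG.
  rewrite /T /T' !mulmx_block !mul1mx !mulmx1 !mulmx0 !mul0mx !addr0 !add0r.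
  by rewrite e12' addr0 mulmxN mul1mx mul0mx add0r addNr.
Qed.

Lemma pid_block (R : idomainType) (hB : bezout_domain R) n r : (block_mx 1%:M 0 0 (pid_mx r) : 'M[R]_(1 + n)) = pid_mx r.+1.
Proof.
apply/matrixP => i j; rewrite -[i]splitK -[j]splitK.
case: (split i) => i'; case: (split j) => j';
  rewrite /unsplit ?block_mxEul ?block_mxEur ?block_mxEdl ?block_mxEdr !mxE /=.
all: by rewrite ?ord1 //=.
Qed.

Lemma idem_nf (R : idomainType) (hB : bezout_domain R) n (E : 'M[R]_n) : E *m E = E ->
  exists r (P Q : 'M[R]_n),
  [/\ (r <= n)%N, P *m Q = 1%:M, Q *m P = 1%:M & P *m E *m Q = pid_mx r].
Proof.
elim: n E => [|n IH] E idE.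
  by exists 0%N, 1%:M, 1%:M; split => //; apply/matrixP => -[].
have [->|nzE] := eqVneq E 0.
  by exists 0%N, 1%:M, 1%:M; split => //; rewrite ?mulmx1 ?mulmx0 ?mul0mx ?pid_mx_0.
move: E idE nzE; change n.+1 with (1 + n)%N => E idE nzE.
have [P1 [Q1 [E1 [PQ1 QP1 idE1 eE1]]]] := idem_step hB idE nzE.
have [r [P2 [Q2 [rn PQ2 QP2 eE2]]]] := IH E1 idE1.
pose BP : 'M[R]_(1 + n) := block_mx 1%:M 0 0 P2.
pose BQ : 'M[R]_(1 + n) := block_mx 1%:M 0 0 Q2.
have BPQ : BP *m BQ = 1%:M.
  rewrite /BP /BQ mulmx_block !mul1mx !mulmx0 !mul0mx !addr0 !add0r PQ2.
  by rewrite -scalar_mx_block.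
have BQP : BQ *m BP = 1%:M.
  rewrite /BP /BQ mulmx_block !mul1mx !mulmx0 !mul0mx !addr0 !add0r QP2.
  by rewrite -scalar_mx_block.
exists r.+1, (BP *m P1), (Q1 *m BQ); split => //.
- by rewrite mulmxA -(mulmxA BP) PQ1 mulmx1 BPQ.
- by rewrite mulmxA -(mulmxA Q1) BQP mulmx1 QP1.
- have -> : BP *m P1 *m E *m (Q1 *m BQ) = BP *m (P1 *m E *m Q1) *m BQ.
    by rewrite !mulmxA.
  rewrite eE1 /BP /BQ !mulmx_block !mul1mx !mulmx1 !mulmx0 !mul0mx !addr0 !add0r.
  by rewrite eE2 mul0mx pid_block.
Qed.

Local Notation fr := (@FracField.tofrac _).
Local Notation rk M := (\rank (map_mx fr M)).

Lemma rank_nf (R : idomainType) (hB : bezout_domain R) n (E P Q : 'M[R]_n) r : (r <= n)%N -> P *m Q = 1%:M -> Q *m P = 1%:M ->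
  P *m E *m Q = pid_mx r -> rk E = r.
Proof.
move=> rn PQ QP eE.
have eE' : E = Q *m pid_mx r *m P by rewrite -eE !mulmxA QP mul1mx -mulmxA QP mulmx1.
have hp : \rank (pid_mx r : 'M[{fraction R}]_n) = r := @rank_pid_mx {fraction R} _ _ _ rn rn.
apply/eqP; rewrite eqn_leq; apply/andP; split.
  rewrite eE' !map_mxM map_pid_mx; apply: leq_trans (mxrankM_maxl _ _) _.
  by apply: leq_trans (mxrankM_maxr _ _) _; rewrite hp.
apply: (@leq_trans (\rank (map_mx fr (P *m E *m Q)))); first by rewrite eE map_pid_mx hp.
rewrite !map_mxM; apply: leq_trans (mxrankM_maxl _ _) _; exact: mxrankM_maxr.
Qed.

Lemma idem_sim (R : idomainType) (hB : bezout_domain R) n (E F A V : 'M[R]_n) : E *m E = E -> F *m F = F ->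
  A *m V = E -> V *m A = F ->
  exists U U' : 'M[R]_n, [/\ U *m U' = 1%:M, U' *m U = 1%:M & U *m E = F *m U].
Proof.
move=> idE idF AV VA.
have [r [P1 [Q1 [rn PQ1 QP1 e1]]]] := idem_nf hB idE.
have [s [P2 [Q2 [sn PQ2 QP2 e2]]]] := idem_nf hB idF.
have rkE := rank_nf hB rn PQ1 QP1 e1.
have rkF := rank_nf hB sn PQ2 QP2 e2.
have le1 : (rk E <= rk F)%N.
  have -> : E = A *m F *m V by rewrite -idE -AV -VA !mulmxA.
  rewrite !map_mxM.
  by apply: leq_trans (mxrankM_maxl _ _) _; apply: mxrankM_maxr.
have le2 : (rk F <= rk E)%N.
  have -> : F = V *m E *m A by rewrite -idF -AV -VA !mulmxA.
  rewrite !map_mxM.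
  by apply: leq_trans (mxrankM_maxl _ _) _; apply: mxrankM_maxr.
have rs : r = s by rewrite -rkE -rkF; apply/eqP; rewrite eqn_leq le1 le2.
move: e2; rewrite -rs => e2.
exists (Q2 *m P1), (Q1 *m P2); split.
- by rewrite mulmxA -(mulmxA Q2) PQ1 mulmx1 QP2.
- by rewrite mulmxA -(mulmxA Q1) PQ2 mulmx1 QP1.
- have h1 : E = Q1 *m pid_mx r *m P1 by rewrite -e1 !mulmxA QP1 mul1mx -mulmxA QP1 mulmx1.
  have h2 : F = Q2 *m pid_mx r *m P2 by rewrite -e2 !mulmxA QP2 mul1mx -mulmxA QP2 mulmx1.
  rewrite h1 h2 !mulmxA -(mulmxA Q2 P1 Q1) PQ1 mulmx1.
  by rewrite -(mulmxA _ P2 Q2) PQ2 mulmx1.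
Qed.

Lemma gi_facts (R : idomainType) (hB : bezout_domain R) n (P X : 'M[R]_n) : is_group_inverse P X ->
  [/\ forall W : 'M[R]_n, W *m P *m X = W *m X *m P,
      forall W : 'M[R]_n, W *m X *m P *m X = W *m X,
      forall W : 'M[R]_n, W *m P *m X *m P = W *m P,
      forall W : 'M[R]_n, W *m X *m X *m P = W *m X &
      forall W : 'M[R]_n, W *m P *m X *m X = W *m X].
Proof.
case=> c1 c2 c3.
have g1 : forall W : 'M[R]_n, W *m P *m X = W *m X *m P by move=> W; rewrite -!mulmxA c1.
have g2 : forall W : 'M[R]_n, W *m X *m P *m X = W *m X by move=> W; rewrite -(mulmxA W X P) -(mulmxA W (X *m P) X) c2.
have g3 : forall W : 'M[R]_n, W *m P *m X *m P = W *m P by move=> W; rewrite -(mulmxA W P X) -(mulmxA W (P *m X) P) c3.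
split => // W; first by rewrite -g1 g2.
by rewrite g1 g2.
Qed.

Lemma intertw (R : idomainType) (hB : bezout_domain R) n (P Q Z X Y : 'M[R]_n) : P *m Z = Z *m Q ->
  is_group_inverse P X -> is_group_inverse Q Y -> X *m Z = Z *m Y.
Proof.
move=> hZ gX gY.
have [x1 x2 x3 x4 x5] := gi_facts hB gX.
have [y1 y2 y3 y4 y5] := gi_facts hB gY.
have hZ' : forall W : 'M[R]_n, W *m P *m Z = W *m Z *m Q by move=> W; rewrite -!mulmxA hZ.
have qqy : forall W : 'M[R]_n, W *m Q *m Q *m Y = W *m Q by move=> W; rewrite y1 y3.
have e1 : X *m Z = P *m X *m Z *m Y.
  rewrite -[X *m Z]mul1mx -[P *m X]mul1mx !mulmxA.
  rewrite -[in LHS]x4 hZ' -[in LHS]qqy -hZ' x4 -hZ' -x1 //.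
have e2 : Z *m Y = P *m X *m Z *m Y.
  rewrite -[Z *m Y]mul1mx -[P *m X]mul1mx !mulmxA.
  rewrite -[in LHS]y5 -hZ' -[in LHS]x3 hZ' y5 //.
by rewrite e1 e2.
Qed.

Lemma wv (R : idomainType) (hB : bezout_domain R) n (L1 L2 : 'M[R]_n) : L1 = L2 ->
  forall (W : 'M[R]_n) , W *m L1 = W *m L2.
Proof. by move=> ->. Qed.

Lemma core (R : idomainType) (hB : bezout_domain R) n (P Q X Y A Z : 'M[R]_n) : is_group_inverse P X -> is_group_inverse Q Y ->
  P *m A = A *m Q -> Q *m Z = Z *m P -> A *m Z *m P = P *m P *m P ->
  Z *m A = Q *m Q -> mx_similar X Y.
Proof.
move=> gX gY hPA0 hQZ0 hAZP0 hZA0.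
have hXA0 := intertw hB hPA0 gX gY.
have hYZ0 := intertw hB hQZ0 gY gX.
have [x1 x2 x3 x4 x5] := gi_facts hB gX.
have [y1 y2 y3 y4 y5] := gi_facts hB gY.
have hPA : forall W : 'M[R]_n, W *m P *m A = W *m A *m Q by move=> W; rewrite -!mulmxA hPA0.
have hQZ : forall W : 'M[R]_n, W *m Q *m Z = W *m Z *m P by move=> W; rewrite -!mulmxA hQZ0.
have hXA : forall W : 'M[R]_n, W *m X *m A = W *m A *m Y by move=> W; rewrite -!mulmxA hXA0.
have hYZ : forall W : 'M[R]_n, W *m Y *m Z = W *m Z *m X by move=> W; rewrite -!mulmxA hYZ0.
have hZA : forall W : 'M[R]_n, W *m Z *m A = W *m Q *m Q by move=> W; rewrite -!mulmxA hZA0 !mulmxA.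
have hAZP : forall W : 'M[R]_n, W *m A *m Z *m P = W *m P *m P *m P.
  by move=> W; rewrite -(mulmxA W A Z) -(mulmxA W (A *m Z) P) hAZP0 !mulmxA.
set E := P *m X; set F := Q *m Y; set V := Z *m X *m X.
have l1 : forall M : 'M[R]_n, M = 1%:M *m M by move=> M; rewrite mul1mx.
have AV : A *m V = E.
  rewrite /V /E -[LHS]mul1mx -[RHS]mul1mx !mulmxA.
  by rewrite -(x5 (1%:M *m A *m Z)) hAZP x5 x5.
have VA : V *m A = F.
  rewrite /V /F -[LHS]mul1mx -[RHS]mul1mx !mulmxA.
  by rewrite hXA hXA hZA y5.
have VE : V *m E = V by rewrite /V /E !mulmxA x2.
have FV : F *m V = V.
  rewrite /V /F -[LHS]mul1mx -[RHS]mul1mx !mulmxA.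
  by rewrite hYZ hQZ x5.
have AF : A *m F = E *m A.
  rewrite /E /F -[LHS]mul1mx -[RHS]mul1mx !mulmxA.
  by rewrite -hPA hXA.
have EX : E *m X = X by rewrite /E -[LHS]mul1mx !mulmxA x5 mul1mx.
have YF : Y *m F = Y by rewrite /F -[LHS]mul1mx !mulmxA y2 mul1mx.
have EE : E *m E = E by rewrite /E -[LHS]mul1mx !mulmxA x3 mul1mx.
have FF : F *m F = F by rewrite /F -[LHS]mul1mx !mulmxA y3 mul1mx.
have EAF : E *m (A *m F) = A *m F by rewrite AF mulmxA EE.
have [U [U' [UU' U'U UE]]] := idem_sim hB EE FF AV VA.
have EU' : E *m U' = U' *m F.
  by rewrite -[U' *m F]mulmx1 -UU' mulmxA -(mulmxA U' F U) -UE mulmxA U'U mul1mx.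
have idm1 : forall G : 'M[R]_n, G *m G = G -> (1%:M - G) *m (1%:M - G) = 1%:M - G.
  by move=> G GG; rewrite mulmxBr mulmx1 mulmxBl mul1mx GG subrr subr0.
pose S := V + U *m (1%:M - E).
pose S' := A *m F + U' *m (1%:M - F).
have SS' : S *m S' = 1%:M.
  have t1 : V *m (A *m F) = F by rewrite mulmxA VA FF.
  have t2 : V *m (U' *m (1%:M - F)) = 0.
    by rewrite [U' *m _]mulmxBr mulmx1 -EU' mulmxBr mulmxA VE subrr.
  have t3 : U *m (1%:M - E) *m (A *m F) = 0.
    by rewrite -mulmxA mulmxBl mul1mx EAF subrr mulmx0.
  have t4 : U *m (1%:M - E) *m (U' *m (1%:M - F)) = 1%:M - F.
    rewrite -mulmxA (mulmxA (1%:M - E)) mulmxBl mul1mx EU'.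
    have -> : U' - U' *m F = U' *m (1%:M - F) by rewrite mulmxBr mulmx1.
    by rewrite -(mulmxA U') (idm1 F FF) mulmxA UU' mul1mx.
  rewrite /S /S' mulmxDl (mulmxDr V) (mulmxDr (U *m (1%:M - E))) t1 t2 t3 t4 addr0 add0r.
  by rewrite addrC subrK.
have SX : S *m X = Y *m S.
  rewrite /S mulmxDl mulmxDr -mulmxA mulmxBl mul1mx EX subrr mulmx0 addr0.
  rewrite mulmxA mulmxBr mulmx1 -(mulmxA Y U E) UE mulmxA YF subrr addr0.
  by rewrite /V -[Y *m _]mul1mx !mulmxA hYZ mul1mx.
have [uS _] := mulmx1_unit SS'.
exists S; split => //.
by rewrite -mulmxA -SX mulmxA mulVmx // mul1mx.
Qed.

Theorem theorem3p1 (R : idomainType) (n : nat) (A B C : 'M[R]_n) :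
  bezout_domain R ->
  A *m B *m A = A *m C *m A ->
  group_invertible (A *m B) -> group_invertible (C *m A) ->
  forall X Y : 'M[R]_n,
    is_group_inverse (A *m B) X -> is_group_inverse (C *m A) Y ->
    mx_similar X Y.
Proof.
move=> hB h _ _ X Y gX gY.
have h' : forall W : 'M[R]_n, W *m A *m B *m A = W *m A *m C *m A.
  by move=> W; rewrite -!mulmxA (mulmxA A) h -!mulmxA.
apply: (core hB (A := A) (Z := C *m (A *m B)) gX gY).
- by rewrite !mulmxA h.
- by rewrite !mulmxA h'.
- by rewrite -[LHS]mul1mx -[RHS]mul1mx !mulmxA !h'.
- by rewrite !mulmxA h'.
Qed.
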